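(* In base $B=2$, for every integer $\eta\ge 2$, $$\gamma_2(\eta)=\Bigl(2^{-1}\,2\uparrow\uparrow(\eta-1)\Bigr)^{3}-1,$$ i.e. with $E_1=2^{-1}2^{3}$ and $E_{m+1}=2^{-1}2^{E_m}$ for $m\ge1$, one has $\gamma_2(\eta)=E_{\eta-1}-1$.
   Context: Every integer $x>0$ is written uniquely in base $2$ as $x=\sum_{i} x_i 2^i$ with binary digits $x_i$. Define $\mathcal{H}_2(x)=\sum_{i} x_i^2$, $\mathcal{H}_2^0(x)=x$, $\mathcal{H}_2^n=\mathcal{H}_2\circ\mathcal{H}_2^{n-1}$. A positive integer $x$ is happy if $\mathcal{H}_2^n(x)=1$ for some $n\in\mathbb{N}$; its height is $\eta_2(x)=\min\{\alpha\in\mathbb{N}:\mathcal{H}_2^\alpha(x)=1\}$. For $n\in\mathbb{N}$, $\gamma_2(n)$ denotes the smallest happy number $x\ge1$ with $\eta_2(x)=n$. Adapted up-arrow notation: for reals $k,x,y,z$ and integer $n\ge1$, $k(xy\uparrow\uparrow n)^z=k\,E_n$ where $E_1=x\,y^{z}$ and $E_{m+1}=x\,y^{E_m}$ (the factor ''$xy$'' is repeated $n$ times in the tower $k\,x y^{x y^{\cdot^{\cdot^{x y^{z}}}}}$); an omitted $k$ means $k=1$. *)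

(* Defs.v *)
From mathcomp Require Import all_boot.
Set Implicit Arguments. Unset Strict Implicit. Unset Printing Implicit Defensive.

Definition digit2 (x i : nat) : nat := (x %/ 2 ^ i) %% 2.

(* H_2(x) = sum_i x_i^2 ; digits with index >= x are zero, so summing
   over i < x.+1 covers all digits. *)
Definition H2 (x : nat) : nat := \sum_(i < x.+1) (digit2 x i) ^ 2.

Definition happy2 (x : nat) : Prop := exists n, iter n H2 x = 1.

Definition height2 (x a : nat) : Prop :=
  iter a H2 x = 1 /\ forall b, b < a -> iter b H2 x <> 1.

Definition is_gamma2 (n g : nat) : Prop :=
  [/\ 1 <= g, happy2 g, height2 g n &
      forall x, 1 <= x -> happy2 x -> height2 x n -> g <= x].

(* Adapted up-arrow tower (2^{-1} 2 ^^ m)^3 :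
   tower2 0 = 3 (the top exponent z), tower2 (m+1) = 2^{-1} * 2^(tower2 m).
   So tower2 m = E_m for m >= 1; division by 2 is exact here. *)
Fixpoint tower2 (m : nat) : nat :=
  match m with
  | 0 => 3
  | m'.+1 => 2 ^ tower2 m' %/ 2
  end.

(* Main.v *)
Require Import Defs.
From mathcomp Require Import all_boot.
From mathcomp Require Import zify.

Fixpoint popc (N x : nat) : nat :=
  match N with 0 => 0 | N'.+1 => x %% 2 + popc N' (x %/ 2) end.

Lemma popc0 M : popc M 0 = 0.
Proof. by elim: M => //= M ->. Qed.

Lemma popc_fuel N M x : x <= N -> x <= M -> popc N x = popc M x.
Proof.
elim: N M x => [|N IH] M x hN hM.
  have -> : x = 0 by lia. by rewrite !popc0.
case: M hM => [|M] hM.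
  have -> : x = 0 by lia. by rewrite !popc0.
rewrite /= (IH M) //; lia.
Qed.

Lemma sq_mod2 a : (a %% 2) ^ 2 = a %% 2.
Proof. by rewrite modn2; case: (odd a). Qed.

Lemma sum_popc N x : \sum_(i < N) (digit2 x i) ^ 2 = popc N x.
Proof.
elim: N x => [|N IH] x; first by rewrite big_ord0.
rewrite big_ord_recl /= -IH /digit2 expn0 divn1 sq_mod2; congr (_ + _).
apply: eq_bigr => i _; have -> : bump 0 i = i.+1 by []. by rewrite [2 ^ i.+1]expnS divnMA.
Qed.

Lemma H2_popc x : H2 x = popc x.+1 x.
Proof. exact: sum_popc. Qed.

Lemma H2_rec x : H2 x = x %% 2 + H2 (x %/ 2).
Proof.
rewrite !H2_popc [popc x.+1 x]/=; congr (_ + _); apply: popc_fuel; lia.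
Qed.

Lemma H2_mersenne k : H2 (2 ^ k - 1) = k.
Proof.
elim: k => [|k IH]; first by rewrite expn0 subnn H2_popc.
rewrite H2_rec expnS.
have hp : 0 < 2 ^ k by rewrite expn_gt0.
have -> : (2 * 2 ^ k - 1) %% 2 = 1 by lia.
have -> : (2 * 2 ^ k - 1) %/ 2 = 2 ^ k - 1 by lia.
by rewrite IH.
Qed.

Lemma H2_bound x : 2 ^ H2 x <= x.+1.
Proof.
elim: x {-2}x (leqnn x) => [|n IH] x hx.
  have -> : x = 0 by lia. by rewrite H2_popc.
case: x hx => [|x] hx; first by rewrite H2_popc.
rewrite H2_rec expnD.
have h := IH (x.+1 %/ 2) ltac:(lia).
have e := divn_eq x.+1 2.
have : x.+1 %% 2 = 0 \/ x.+1 %% 2 = 1 by lia.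
case=> E; rewrite E ?expn0 ?expn1; lia.
Qed.

Lemma tower_ge m : 3 <= tower2 m.
Proof.
elim: m => [|m IH] //=.
case: (tower2 m) IH => [|s] // hs.
rewrite expnS mulKn //.
have : 2 ^ 2 <= 2 ^ s by rewrite leq_exp2l //; lia.
rewrite expnS expn1; lia.
Qed.

Lemma towerS m : tower2 m.+1 - 1 = 2 ^ (tower2 m - 1) - 1.
Proof.
have := tower_ge m; rewrite /=.
case: (tower2 m) => [|s] // _.
by rewrite expnS mulKn // subSS subn0.
Qed.

Lemma height_H2 x n : height2 x n.+1 -> height2 (H2 x) n.
Proof.
move=> [h1 h2]; split; first by rewrite -iterSr.
move=> b hb; rewrite -iterSr; apply: h2; lia.
Qed.

Lemma main m : 1 <= m -> height2 (tower2 m - 1) m.+1 /\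
  forall x, height2 x m.+1 -> tower2 m - 1 <= x.
Proof.
elim: m => [|m IH] // _.
case: m IH => [|m] IH.
  have e3 : tower2 1 - 1 = 3 by [].
  have H3 : H2 3 = 2 by rewrite H2_popc.
  have H2' : H2 2 = 1 by rewrite H2_popc.
  rewrite e3; split.
    split; first by rewrite /= H3 H2'.
    by move=> [|[|b]] //= _; rewrite ?H3.
  move=> x [h1 h2]; case: x h1 h2 => [|[|[|x]]] //.
  - by rewrite /= !H2_popc.
  - by move=> _ /(_ 0 isT).
  - by move=> _ /(_ 1 isT); rewrite /= H2'.
have [[i1 i2] imin] := IH isT.
have g3 := tower_ge m.+1.
rewrite towerS; split.
  split; first by rewrite iterSr H2_mersenne.
  move=> [|b] hb.
    change (2 ^ (tower2 m.+1 - 1) - 1 <> 1); have : 2 ^ 2 <= 2 ^ (tower2 m.+1 - 1) by rewrite leq_exp2l //; lia.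
    lia.
  by rewrite iterSr H2_mersenne; apply: i2.
move=> x hx.
have := imin _ (@height_H2 _ _ hx).
move=> hle.
have : 2 ^ (tower2 m.+1 - 1) <= 2 ^ H2 x by rewrite leq_exp2l.
have := H2_bound x; lia.
Qed.

Theorem mainTheorem11 (eta : nat) : 2 <= eta -> is_gamma2 eta (tower2 eta.-1 - 1).
Proof.
case: eta => [|m] // hm; have hm1 : 1 <= m by lia.
have [hh hmin] := @main m hm1.
have g3 := tower_ge m.
split => //=; first lia.
  by exists m.+1; case: hh.
by move=> x _ _; apply: hmin.
Qed.
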